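(* Let $(V,V_0,V_1,E)$ be a finite turn-based game graph in which every node has at least one successor, and let $G\subseteq V$ be such that from every node of $V$ there is a path in $E$ to some node of $G$. Then for every $j_0\in\{0,1\}$ the call $\textsc{GameStack}(j_0,G,V)$ terminates: every execution of the while loop terminates, and only finitely many recursive calls of $\textsc{GameStack}$ are made.
   Context: Turn-based game graph: $V$ is the node set, partitioned into $V_0$ (nodes where player 0 moves) and $V_1$ (nodes where player 1 moves), $E\subseteq V\times V$ the edges. For $j\in\{0,1\}$ and $X\subseteq V$: $\mathrm{CPre}_j(X)=\{v\in V_j:\exists(v,u)\in E,\ u\in X\}\cup\{v\in V_{1-j}:\forall(v,u)\in E,\ u\in X\}$. Attractor: $\mathrm{Attr}_j(S)=\mu X.\,S\cup\mathrm{CPre}_j(X)$ (least fixpoint). Controlled-escape set: $\mathrm{Trap}_j(S,E')=\nu X.\,E'\cup(\mathrm{CPre}_j(X)\cap S)$ (greatest fixpoint). Procedure $\textsc{UnconditionalAssumption}(j,g)$: $A:=\mathrm{Attr}_j(g)$; $B:=\mathrm{Attr}_{1-j}(A)$; $r:=(B\setminus A)\cap\mathrm{Trap}_j(B,A)$; return $(A,r)$. Procedure $\textsc{GameStack}(j,G,U)$: set $\mathit{goal}:=G$ and $\mathit{trap}:=V$; while $\mathit{trap}\ne\emptyset$: $(\mathit{attr},\mathit{trap}):=\textsc{UnconditionalAssumption}(j,\mathit{goal})$, $\mathit{goal}:=\mathit{attr}\cup\mathit{trap}$, and record the assumption $\Box\Diamond(\mathit{trap}\rightarrow\mathit{attr})$.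 After the loop, record the game $(j,\mathit{goal}\setminus G,G,\text{assumptions})$ on a stack, set $U:=U\setminus\mathit{goal}$; if $U=\emptyset$ return; otherwise call $\textsc{GameStack}(1-j,\mathit{goal},U)$ and then return. (The recorded data does not affect control flow.) *)

(* Defs.v *)
From mathcomp Require Import all_boot.
Set Implicit Arguments. Unset Strict Implicit. Unset Printing Implicit Defensive.

Section Game.
Variables (V : finType) (V0 : {set V}) (E : rel V).

(* Players are encoded as booleans: false = player 0, true = player 1.
   V_1 is the complement of V_0. *)
Definition Vpl (j : bool) : {set V} := if j then ~: V0 else V0.

Definition CPre (j : bool) (X : {set V}) : {set V} :=
  [set v in Vpl j | [exists u, E v u && (u \in X)]]
  :|: [set v in Vpl (~~ j) | [forall u, E v u ==> (u \in X)]].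

Definition lfp (F : {set V} -> {set V}) : {set V} :=
  \bigcap_(X : {set V} | F X \subset X) X.
Definition gfp (F : {set V} -> {set V}) : {set V} :=
  \bigcup_(X : {set V} | X \subset F X) X.

Definition Attr (j : bool) (S : {set V}) : {set V} :=
  lfp (fun X => S :|: CPre j X).

Definition Trap (j : bool) (S E' : {set V}) : {set V} :=
  gfp (fun X => E' :|: (CPre j X :&: S)).

Definition UnconditionalAssumption (j : bool) (g : {set V})
  : {set V} * {set V} :=
  let A := Attr j g in
  let B := Attr (~~ j) A in
  (A, (B :\: A) :&: Trap j B A).

(* [loop_run j goal trap goal'] : the while loop started in state
   (goal, trap) terminates, with final value goal' of the variable goal. *)
Inductive loop_run (j : bool) : {set V} -> {set V} -> {set V} -> Prop :=
| loop_stop goal : loop_run j goal set0 goal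
| loop_step goal trap goal' :
    trap != set0 ->
    loop_run j ((UnconditionalAssumption j goal).1 :|:
                (UnconditionalAssumption j goal).2)
               (UnconditionalAssumption j goal).2 goal' ->
    loop_run j goal trap goal'.

(* [GameStack_terminates j G U] : the call GameStack(j, G, U) terminates
   (finite derivation = every while loop terminates and finitely many
   recursive calls are made).  The recorded stack data does not affect
   control flow and is omitted. *)
Inductive GameStack_terminates : bool -> {set V} -> {set V} -> Prop :=
| gs_return j G U goal :
    loop_run j G setT goal ->
    U :\: goal = set0 ->
    GameStack_terminates j G U
| gs_recurse j G U goal :
    loop_run j G setT goal ->
    U :\: goal != set0 ->
    GameStack_terminates (~~ j) goal (U :\: goal) ->
    GameStack_terminates j G U.

End Game.

(* Main.v *)
Require Import Defs.
From mathcomp Require Import all_boot.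

Section Pf.
Variables (V : finType) (V0 : {set V}) (E : rel V).

Lemma CPre_mono j (X Y : {set V}) : X \subset Y -> CPre V0 E j X \subset CPre V0 E j Y.
Proof.
move=> /subsetP XY; apply/subsetP=> v; rewrite !inE.
case/orP=> [/andP[vj /existsP[u /andP[e uX]]]|/andP[vj /forallP H]]; apply/orP.
  left; rewrite vj /=; apply/existsP; exists u; by rewrite e (XY _ uX).
right; rewrite vj /=; apply/forallP=> u; apply/implyP=> e; apply: XY.
exact: (implyP (H u) e).
Qed.

Lemma Attr_sub j (S : {set V}) : S \subset Attr V0 E j S.
Proof.
apply/subsetP=> x xS; rewrite /Attr /lfp; apply/bigcapP=> X /subsetP FX.
by apply: FX; rewrite inE xS.
Qed.

Lemma CPre_Attr j (S : {set V}) : CPre V0 E j S \subset Attr V0 E j S.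
Proof.
apply/subsetP=> x xC; apply/bigcapP=> X FX.
have SX : S \subset X by apply: subset_trans FX; apply: subsetUl.
apply: (subsetP FX); rewrite inE; apply/orP; right.
move: x xC; apply/subsetP; exact: CPre_mono.
Qed.

Lemma card_lt (A B : {set V}) : A \subset B -> (exists2 x, x \in B & x \notin A) ->
  #|~: B| < #|~: A|.
Proof. by move=> AB ex; apply: proper_card; rewrite properC; apply/properP. Qed.

Lemma loop_ex j n : forall goal trap : {set V}, #|~: goal| < n ->
  exists g', [/\ loop_run V0 E j goal trap g', goal \subset g' &
                 (trap != set0 -> Attr V0 E j goal \subset g')].
Proof.
elim: n => [//|n IH] goal trap hn.
case: (eqVneq trap set0) => [->|tr0].
  by exists goal; split=> //; apply: loop_stop.
have Ag : goal \subset Attr V0 E j goal by apply: Attr_sub.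
case: (eqVneq (UnconditionalAssumption V0 E j goal).2 set0) => r0.
  exists ((UnconditionalAssumption V0 E j goal).1 :|:
          (UnconditionalAssumption V0 E j goal).2); split.
  - apply: loop_step => //; rewrite {2}r0; exact: loop_stop.
  - exact: subset_trans Ag (subsetUl _ _).
  - by move=> _; apply: subsetUl.
have [x xr] := set0Pn _ r0.
have xA : x \notin Attr V0 E j goal.
  by move: xr; rewrite /= !inE => /andP[/andP[]].
have sub1 : goal \subset (UnconditionalAssumption V0 E j goal).1 :|:
          (UnconditionalAssumption V0 E j goal).2.
  exact: subset_trans Ag (subsetUl _ _).
have ex1 : exists2 y, y \in (UnconditionalAssumption V0 E j goal).1 :|:
          (UnconditionalAssumption V0 E j goal).2 & y \notin goal.
  exists x; first by rewrite inE xr orbT.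
  by apply: contra xA; apply: (subsetP Ag).
have [g' [lr sg' _]] := IH ((UnconditionalAssumption V0 E j goal).1 :|:
          (UnconditionalAssumption V0 E j goal).2)
   (UnconditionalAssumption V0 E j goal).2
   (leq_trans (card_lt _ _ sub1 ex1) hn).
exists g'; split.
- exact: loop_step.
- exact: subset_trans Ag (subset_trans (subsetUl _ _) sg').
- by move=> _; exact: subset_trans (subsetUl _ _) sg'.
Qed.

Lemma path_exit (G : {set V}) p : forall w, w \notin G -> path E w p ->
  last w p \in G -> exists x y, [/\ x \notin G, y \in G & E x y].
Proof.
elim: p => [|a p IH] w wG /=; first by move=> _ h; rewrite h in wG.
case/andP=> ewa pa la.
case aG: (a \in G); first by exists w, a.
by apply: (IH a) => //; rewrite aG.
Qed.

Lemma Vpl_neg j v : (v \in Vpl V0 (~~ j)) = (v \notin Vpl V0 j).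
Proof. by case: j; rewrite /Vpl /= ?inE ?negbK. Qed.

Lemma setCD (G g : {set V}) : G \subset g -> ~: G :\: g = ~: g.
Proof.
move=> /subsetP Gg; apply/setP => y; rewrite !inE.
case yg: (y \in g); case yG: (y \in G) => //.
by move: (Gg y); rewrite yG yg => /(_ isT).
Qed.

Definition reach (G : {set V}) := forall v, exists2 u, u \in G & connect E v u.

Lemma reach_up (G g : {set V}) : G \subset g -> reach G -> reach g.
Proof.
move=> /subsetP Gg R v; have [u uG c] := R v; exists u => //; exact: Gg.
Qed.

Lemma main_aux n : forall j (G : {set V}), #|~: G| < n -> reach G ->
  GameStack_terminates V0 E j G (~: G).
Proof.
elim: n => [//|n IH] j G hn R.
have [g [lr Gg Ag]] := loop_ex j _ G setT (ltnSn _).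
case: (eqVneq (~: G :\: g) set0) => [e|ne]; first exact: gs_return lr e.
have [x xng] := set0Pn _ ne.
have T0 : [set: V] != set0 by apply/set0Pn; exists x; rewrite inE.
have {}Ag := Ag T0.
case: (eqVneq g G) => [egG|neG].
- subst g.
  have xG : x \notin G by move: xng; rewrite !inE => /andP[].
  have [u uG c] := R x.
  have [p pth lst] := connectP c.
  have [v [y [vG yG evy]]] := path_exit G p x xG pth (eq_ind _ (fun z => z \in G) uG _ lst).
  apply: (gs_recurse lr ne); rewrite setDE setIid.
  have [g2 [lr2 Gg2 Ag2]] := loop_ex (~~ j) _ G setT (ltnSn _).
  have {}Ag2 := Ag2 T0.
  have vg2 : v \in g2.
    apply: (subsetP Ag2); apply: (subsetP (CPre_Attr _ _)).
    rewrite /CPre !inE; apply/orP; left; apply/andP; split.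
      rewrite Vpl_neg; apply/negP => vj; apply: (negP vG).
      apply: (subsetP Ag); apply: (subsetP (CPre_Attr _ _)).
      rewrite /CPre !inE vj /=; apply/orP; left; apply/existsP; exists y; by rewrite evy.
    by apply/existsP; exists y; rewrite evy.
  case: (eqVneq (~: G :\: g2) set0) => [e|ne2]; first exact: gs_return lr2 e.
  apply: (gs_recurse lr2 ne2); rewrite setCD // negbK.
  apply: IH; last exact: reach_up Gg2 R.
  rewrite ltnS in hn; apply: (leq_trans _ hn); apply: card_lt => //; by exists v.
- apply: (gs_recurse lr ne); rewrite setCD //.
  apply: IH; last exact: reach_up Gg R.
  rewrite ltnS in hn; apply: (leq_trans _ hn); apply: card_lt => //.
  have : ~~ (g \subset G) by apply: contra neG => gG; rewrite eqEsubset gG Gg.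
  by case/subsetPn=> z zg zG; exists z.
Qed.

End Pf.

Theorem mainTheorem4 (V : finType) (V0 : {set V}) (E : rel V) (G : {set V})
  (hsucc : forall v : V, exists u : V, E v u)
  (hreach : forall v : V, exists2 u : V, u \in G & connect E v u)
  (j0 : bool) :
  GameStack_terminates V0 E j0 G setT.
Proof.
have [g [lr Gg _]] := @loop_ex V V0 E j0 _ G setT (ltnSn _).
case: (eqVneq (setT :\: g) set0) => [e|ne]; first exact: gs_return lr e.
apply: (gs_recurse lr ne); rewrite setTD.
apply: (@main_aux V V0 E _ _ _ (ltnSn _)); exact: reach_up Gg hreach.
Qed.
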